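(* Let $a$ be an odd positive integer and $b$ a positive integer. Then there are infinitely many practical numbers of the form $an+b$ with $n$ a nonnegative integer.
   Context: A positive integer $N$ is called a practical number if every integer in $[1,N]$ can be expressed as a sum of distinct positive divisors of $N$. *)

(* Defs.v *)
From mathcomp Require Import all_boot.
Set Implicit Arguments. Unset Strict Implicit. Unset Printing Implicit Defensive.

(* Distinct positive divisors of N are represented by a subsequence of the
   sorted duplicate-free list [divisors N]. *)
Definition practical (N : nat) : Prop :=
  0 < N /\
  forall m, 1 <= m <= N ->
    exists s : seq nat, subseq s (divisors N) /\ sumn s = m.

(* Main.v *)
Require Import Defs.
From mathcomp Require Import all_boot.
From mathcomp Require Import cyclic zify.

Lemma bits c k q : 0 < c -> q < 2 ^ k ->
  exists s : seq nat, [/\ uniq s,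
    (forall x, x \in s -> exists2 j, j < k & x = c * 2 ^ j) & sumn s = c * q].
Proof.
move=> c0; elim: k q => [|k IH] q.
  rewrite expn0 ltnS leqn0 => /eqP ->; exists [::]; split => //; by rewrite muln0.
move=> hq; case: (ltnP q (2 ^ k)) => hk.
  have [s [u hs e]] := IH q hk; exists s; split => // x /hs [j hj ->].
  by exists j => //; apply: ltnW.
have hq' : q - 2 ^ k < 2 ^ k by rewrite expnS mul2n -addnn in hq; lia.
have [s [u hs e]] := IH _ hq'; exists (c * 2 ^ k :: s); split.
- rewrite /= u andbT; apply/negP => /hs [j hj hE].
  have : 2 ^ j < 2 ^ k by rewrite ltn_exp2l.
  have : c * 2 ^ j < c * 2 ^ k by rewrite ltn_pmul2l // ltn_exp2l.
  lia.
- move=> x; rewrite inE => /orP [/eqP -> | /hs [j hj ->]].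
    by exists k.
  by exists j => //; apply: ltnW.
- rewrite /= e -mulnDr subnKC //.
Qed.

Lemma disj m i j : odd m -> 1 < m -> m * 2 ^ j <> 2 ^ i.
Proof.
move=> om m1 E.
have d : m %| 2 ^ i by rewrite -E dvdn_mulr.
have cp : coprime m (2 ^ i) by apply: coprimeXr; rewrite coprimen2.
move: cp; rewrite /coprime; move/gcdn_idPl: d => ->; move/eqP => h.
by rewrite h in m1.
Qed.

Lemma subseq_of N s : uniq s -> (forall x, x \in s -> x \in divisors N) ->
  exists s', subseq s' (divisors N) /\ sumn s' = sumn s.
Proof.
move=> us hs; exists [seq x <- divisors N | x \in s]; split.
  exact: filter_subseq.
apply: perm_sumn; apply: uniq_perm.
- by apply: filter_uniq; apply: divisors_uniq.
- exact: us.
move=> x; rewrite mem_filter; case hx: (x \in s) => //=.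
by rewrite hs.
Qed.

Lemma practical_pow m k : odd m -> 1 < m -> m <= 2 ^ k -> practical (2 ^ k * m).
Proof.
move=> om m1 mk.
have m0 : 0 < m by lia.
have p0 : 0 < 2 ^ k by rewrite expn_gt0.
have N0 : 0 < 2 ^ k * m by rewrite muln_gt0 p0.
split => // x /andP [x1 xN].
have hq : x %/ m < 2 ^ k.+1.
  apply: (@leq_ltn_trans (2 ^ k)); last by rewrite ltn_exp2l.
  have := leq_div2r m xN; by rewrite mulnK.
have hr : x %% m < 2 ^ k.+1.
  apply: (@leq_trans m); first by rewrite ltn_pmod.
  apply: (leq_trans mk); rewrite leq_exp2l //.
have [s1 [u1 h1 e1]] := @bits m _ _ m0 hq.
have [s2 [u2 h2 e2]] := @bits 1 _ _ (isT : 0 < 1) hr.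
have U : uniq (s1 ++ s2).
  rewrite cat_uniq u1 u2 /= andbT; apply/hasPn => y /h2 [i _ ->] .
  rewrite mul1n; apply/negP => /h1 [j _ hE].
  exact: (@disj m i j om m1 (esym hE)).
have D : forall y, y \in s1 ++ s2 -> y \in divisors (2 ^ k * m).
  move=> y; rewrite mem_cat -dvdn_divisors // => /orP [/h1 [j hj ->] | /h2 [j hj ->]].
    rewrite mulnC dvdn_pmul2r //; apply: dvdn_exp2l; by rewrite -ltnS.
  rewrite mul1n; apply: dvdn_mulr; apply: dvdn_exp2l; by rewrite -ltnS.
have [s' [ss se]] := @subseq_of (2 ^ k * m) (s1 ++ s2) U D.
exists s'; split => //; rewrite se sumn_cat e1 e2 mul1n mulnC -divn_eq //.
Qed.

Theorem corollary2p3 (a b : nat) :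
  odd a -> 0 < a -> 0 < b ->
  forall M : nat, exists N : nat,
    M < N /\ practical N /\ exists n : nat, N = a * n + b.
Proof.
move=> oa a0 b0 M.
pose c := if odd b then 2 else 1.
pose m := b + c * a.
have om : odd m.
  rewrite /m /c; case ob: (odd b); rewrite oddD oddM ob //= oa //.
have m1 : 1 < m.
  rewrite /m /c; case ob: (odd b); first lia.
  have : b != 1 by apply/negP => /eqP hb; rewrite hb in ob.
  lia.
pose t := totient a.
have t0 : 0 < t by rewrite /t totient_gt0.
pose k := t * (m + M).
have hk : m + M < 2 ^ k.
  apply: (@leq_trans (2 ^ (m + M))); first by rewrite ltn_expl.
  rewrite leq_exp2l // /k leq_pmull //.
have e1 : 2 ^ k = 1 %[mod a].
  rewrite /k expnM -modnXm Euler_exp_totient ?coprime2n // modnXm exp1n //.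
exists (2 ^ k * m); split; last split.
- apply: (@leq_trans (2 ^ k)); first lia.
  by rewrite leq_pmulr //; lia.
- apply: practical_pow => //; lia.
have bN : b <= 2 ^ k * m.
  apply: (@leq_trans m); first by rewrite /m leq_addr.
  by rewrite leq_pmull // expn_gt0.
have hmod : 2 ^ k * m = b %[mod a].
  by rewrite -modnMml e1 modnMml mul1n /m addnC modnMDl.
have hd : a %| 2 ^ k * m - b by rewrite -eqn_mod_dvd // hmod.
exists ((2 ^ k * m - b) %/ a).
by rewrite [a * _]mulnC divnK // subnK.
Qed.
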